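(* Let $n\ge 3$, let $1\le i<j\le n$, and let $K$ be the $(i,j)$-coordinate coloring of $H_2(n,n-1)$, i.e. $K(x)=(x_i,x_j)\in\mathbb{Z}_2^2$. Then the set of transition edges of $K$ is exactly $\{(x,y): x+y\in\{f_i,f_j\}\}$, and $\mathrm{rb}(K)=\frac{2}{n+1}$. As a consequence, the maximum of $\mathrm{rb}(K')$ over all proper $4$-colorings $K'$ of $H_2(n,n-1)$ equals $\frac{2}{n+1}$.
   Context: $H_2(n,n-1)$ is the simple undirected graph with vertex set $\mathbb{Z}_2^n$ in which $x,y$ are adjacent iff their Hamming distance $|\{i:x_i\ne y_i\}|$ is at least $n-1$. $e_k$ denotes the $k$-th standard basis vector of $\mathbb{Z}_2^n$, $\mathbb{1}$ the all-ones vector, and $f_k=e_k+\mathbb{1}$. For a simple graph $G=(V,E)$ and a proper $k$-coloring $K$, an edge $(x,y)\in E$ is a transition edge for $K$ if swapping the colors of $x$ and $y$ (all other colors unchanged) yields again a proper $k$-coloring; $T(K)$ is the set of transition edges and $\mathrm{rb}(K)=|T(K)|/|E|$ is the robustness. *)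

(* Defs.v *)
From mathcomp Require Import all_boot all_order all_algebra.
Set Implicit Arguments. Unset Strict Implicit. Unset Printing Implicit Defensive.
Import GRing.Theory Num.Theory.
Local Open Scope ring_scope.

Definition vtx (n : nat) := 'rV['F_2]_n.

Definition hamming n (x y : vtx n) : nat := #|[set k : 'I_n | x 0 k != y 0 k]|.

Definition H2 n : rel (vtx n) := fun x y => (n.-1 <= hamming x y)%N.

Definition ev n (k : 'I_n) : vtx n := delta_mx 0 k.
Definition onev n : vtx n := const_mx 1.
Definition fv n (k : 'I_n) : vtx n := ev k + onev n.

Section Coloring.
Variables (T : finType) (C : eqType) (e : rel T).

Definition proper_col (K : T -> C) : bool :=
  [forall x, forall y, e x y ==> (K x != K y)].

Definition swapcol (K : T -> C) (x y : T) : T -> C :=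
  fun z => if z == x then K y else if z == y then K x else K z.

(* edges, as (ordered) pairs (x,y) with x ~ y *)
Definition edges : {set T * T} := [set p | e p.1 p.2].

Definition transition_edges (K : T -> C) : {set T * T} :=
  [set p | e p.1 p.2 & proper_col (swapcol K p.1 p.2)].

Definition rb (K : T -> C) : rat :=
  (#|transition_edges K|)%:R / (#|edges|)%:R.
End Coloring.

Definition coordcol n (i j : 'I_n) (x : vtx n) : 'F_2 * 'F_2 := (x 0 i, x 0 j).

(* Main.v *)
Require Import Defs.
From mathcomp Require Import all_boot all_order all_algebra.
From mathcomp Require Import zify.
Set Implicit Arguments. Unset Strict Implicit. Unset Printing Implicit Defensive.
Import GRing.Theory Num.Theory.
Local Open Scope ring_scope.

Lemma F2c (a : 'F_2) : a = 0 \/ a = 1.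
Proof.
case: a => m H; case: m H => [|[|m]] H.
- by left; apply/val_inj.
- by right; apply/val_inj.
- by move: H; vm_compute.
Qed.

Lemma F2_sumE (c : bool) (a b : 'F_2) : (a + b == c%:R + 1) = ((a == b) == c).
Proof. by case: c; case: (F2c a) => ->; case: (F2c b) => ->. Qed.

Lemma F2_flip (a b : 'F_2) : (if a == b then a else a + 1) = b.
Proof. by case: (F2c a) => ->; case: (F2c b) => ->; apply/eqP. Qed.

Lemma F2_neq1 (a : 'F_2) : (a == a + 1) = false.
Proof. by case: (F2c a) => ->. Qed.

Lemma F2_ne2 (a b c : 'F_2) : a != b -> a != c -> b = c.
Proof. by case: (F2c a) => ->; case: (F2c b) => ->; case: (F2c c) => ->. Qed.

Definition agree n (x y : vtx n) : {set 'I_n} := [set k | x 0 k == y 0 k].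
Definition flip n (x : vtx n) (S : {set 'I_n}) : vtx n :=
  \row_k (if k \in S then x 0 k else x 0 k + 1).

Lemma agree_flip n (x : vtx n) S : agree x (flip x S) = S.
Proof.
apply/setP => k; rewrite !inE mxE; case: (k \in S); by rewrite ?eqxx ?F2_neq1.
Qed.

Lemma flip_agree n (x y : vtx n) : flip x (agree x y) = y.
Proof. apply/rowP => k; rewrite mxE inE; exact: F2_flip. Qed.

Lemma agree_inj n (x y z : vtx n) : agree x y = agree x z -> y = z.
Proof. by move=> H; rewrite -(flip_agree x y) H flip_agree. Qed.

Lemma agreeC n (x y : vtx n) : agree x y = agree y x.
Proof. by apply/setP => k; rewrite !inE eq_sym. Qed.

Lemma agreexx n (x : vtx n) : agree x x = setT.
Proof. by apply/setP => k; rewrite !inE eqxx. Qed.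

Lemma H2E n (x y : vtx n) : H2 x y = (#|agree x y| <= 1)%N.
Proof.
rewrite /H2 /hamming.
have ->: [set k | x 0 k != y 0 k] = ~: agree x y by apply/setP => k; rewrite !inE.
have := cardsC (agree x y); rewrite card_ord.
move: #|agree x y| #|~: agree x y| => a b h.
apply/idP/idP; lia.
Qed.

Lemma H2xx n (x : vtx n) : (2 <= n)%N -> H2 x x = false.
Proof. by move=> h; rewrite H2E agreexx cardsT card_ord; apply/negbTE; rewrite -ltnNge. Qed.

Lemma card_pairs n (A : {set vtx n * vtx n}) :
  #|A| = (\sum_x #|[set y | (x, y) \in A]|)%N.
Proof.
symmetry.
transitivity (\sum_x \sum_y (((x, y) \in A) : nat))%N.
  apply: eq_bigr => x _; rewrite -sum1_card big_mkcond /=.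
  by apply: eq_bigr => y _; rewrite inE; case: ((x, y) \in A).
rewrite pair_big /= -sum1_card.
rewrite [RHS]big_mkcond; apply: eq_bigr => -[x y] _ /=; by case: ((x, y) \in A).
Qed.

Lemma sum_const_all (T : finType) (c : nat) : (\sum_(x : T) c)%N = (#|T| * c)%N.
Proof. by rewrite sum_nat_const. Qed.

Lemma card_agree_x n (x : vtx n) (P : pred {set 'I_n}) :
  #|[set y | P (agree x y)]| = #|[set S | P S]|.
Proof.
have ->: [set y | P (agree x y)] = flip x @: [set S | P S].
  apply/setP => y; rewrite !inE /=; apply/idP/imsetP.
  - by move=> Hy; exists (agree x y); [rewrite inE | rewrite flip_agree].
  - by case=> S; rewrite inE => HS ->; rewrite agree_flip.
apply: card_imset; exact: (can_inj (agree_flip x)).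
Qed.

Lemma card_agreeP n (P : pred {set 'I_n}) :
  #|[set p : vtx n * vtx n | P (agree p.1 p.2)]| = (#|{: vtx n}| * #|[set S | P S]|)%N.
Proof.
rewrite card_pairs -sum_const_all; apply: eq_bigr => x _.
rewrite -(card_agree_x x); congr #|pred_of_set _|.
by apply/setP => y; rewrite !inE.
Qed.

Lemma card_le1 n : #|[set S : {set 'I_n} | (#|S| <= 1)%N]| = n.+1.
Proof.
have ->: [set S : {set 'I_n} | (#|S| <= 1)%N]
   = [set S : {set 'I_n} | #|S| == 0%N] :|: [set S : {set 'I_n} | #|S| == 1%N].
  by apply/setP => S; rewrite !inE; case: #|S| => [|[|m]].
rewrite cardsU.
have ->: [set S : {set 'I_n} | #|S| == 0%N] :&: [set S : {set 'I_n} | #|S| == 1%N] = set0.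
  by apply/setP => S; rewrite !inE; case: #|S| => [|[|m]].
by rewrite cards0 subn0 !card_draws card_ord bin0 bin1 add1n.
Qed.

Lemma card_edges n : #|edges (@H2 n)| = (#|{: vtx n}| * n.+1)%N.
Proof.
have ->: edges (@H2 n) = [set p | (#|agree p.1 p.2| <= 1)%N].
  by apply/setP => p; rewrite !inE H2E.
by rewrite (card_agreeP (fun S => #|S| <= 1)%N) card_le1.
Qed.

Lemma le1_mem n (S : {set 'I_n}) m : (#|S| <= 1)%N -> m \in S -> S = [set m].
Proof. by move=> h1 hm; apply/eqP; rewrite eq_sym eqEcard sub1set hm cards1 h1. Qed.

Lemma key n (w t v : vtx n) m :
  H2 w v -> agree w t = [set m] -> v != t -> t 0 m != v 0 m.
Proof.
rewrite H2E => Hwv Hwt Hvt.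
have Hm : m \notin agree w v.
  apply/negP => Hm; move/eqP: Hvt; apply; apply: (@agree_inj _ w).
  by rewrite Hwt; exact: le1_mem.
have : m \in agree w t by rewrite Hwt set11.
by rewrite !inE in Hm * => /eqP <-.
Qed.

Lemma coord_proper n (i j : 'I_n) : i != j -> proper_col (@H2 n) (coordcol i j).
Proof.
move=> hij; apply/forallP => u; apply/forallP => v; apply/implyP; rewrite H2E => H.
apply/negP; rewrite /coordcol => /eqP [hi hj].
have : [set i; j] \subset agree u v.
  by apply/subsetP => k; rewrite !inE => /orP [] /eqP ->; rewrite ?hi ?hj eqxx.
move/subset_leq_card; rewrite cards2 hij => h.
by have := leq_trans h H.
Qed.

Lemma colne n (i j m : 'I_n) (a b : vtx n) :
  (m == i) || (m == j) -> a 0 m != b 0 m -> coordcol i j a != coordcol i j b.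
Proof.
case/orP => /eqP -> hne; apply/negP => /eqP [h1 h2].
- by move: hne; rewrite h1 eqxx.
- by move: hne; rewrite h2 eqxx.
Qed.

Lemma swap_proper n (i j : 'I_n) (x y : vtx n) m :
  (2 <= n)%N -> i != j -> (m == i) || (m == j) -> agree x y = [set m] ->
  proper_col (@H2 n) (swapcol (coordcol i j) x y).
Proof.
move=> hn hij hm hxy.
have hyx : agree y x = [set m] by rewrite agreeC.
have Hp := coord_proper hij.
have Kne u v : H2 u v -> coordcol i j u != coordcol i j v.
  by move=> h; move/forallP/(_ u)/forallP/(_ v)/implyP: Hp; apply.
have Hxy : H2 x y by rewrite H2E hxy cards1.
have H2sym a b : H2 a b = H2 b a by rewrite !H2E agreeC.
apply/forallP => u; apply/forallP => v; apply/implyP => Huv; rewrite /swapcol.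
case: (eqVneq u x) => [eux | hux].
  subst u.
  case: (eqVneq v x) => [evx | hvx]; first by subst v; rewrite H2xx in Huv.
  case: (eqVneq v y) => [evy | hvy].
    by subst v; rewrite eq_sym; exact: Kne.
  exact: colne hm (key Huv hxy hvy).
case: (eqVneq u y) => [euy | huy].
  subst u.
  case: (eqVneq v x) => [evx | hvx]; first by subst v; exact: Kne.
  case: (eqVneq v y) => [evy | hvy]; first by subst v; rewrite H2xx in Huv.
  exact: colne hm (key Huv hyx hvx).
case: (eqVneq v x) => [evx | hvx].
  subst v; rewrite eq_sym; apply: colne hm (key _ hxy huy).
  by rewrite H2sym.
case: (eqVneq v y) => [evy | hvy].
  subst v; rewrite eq_sym; apply: colne hm (key _ hyx hux).
  by rewrite H2sym.
exact: Kne.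
Qed.

Lemma trans_coord n (i j : 'I_n) : (3 <= n)%N -> i != j ->
  transition_edges (@H2 n) (coordcol i j) =
  [set p | (agree p.1 p.2 == [set i]) || (agree p.1 p.2 == [set j])].
Proof.
move=> hn hij; apply/setP => -[x y]; rewrite !inE /=.
have hn2 : (2 <= n)%N by apply: ltnW.
apply/andP/idP.
- case=> Hxy Hsw; apply/negPn/negP => hno.
  have Hle := Hxy; rewrite H2E in Hle.
  have hi : i \notin agree x y.
    by apply/negP => h; move/negP: hno; apply; rewrite (le1_mem Hle h) eqxx.
  have hj : j \notin agree x y.
    by apply/negP => h; move/negP: hno; apply; rewrite (le1_mem Hle h) eqxx orbT.
  have : (0 < #|~: [set i; j]|)%N.
    by have := cardsC [set i; j]; rewrite cards2 hij card_ord; lia.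
  case/card_gt0P => k; rewrite !inE negb_or => /andP [hki hkj].
  pose S := if agree x y == set0 then [set k] else set0.
  pose z := flip x S.
  have hS1 : (#|S| <= 1)%N by rewrite /S; case: ifP; rewrite ?cards1 ?cards0.
  have Hxz : H2 x z by rewrite H2E /z agree_flip.
  have hzy : z != y.
    apply/negP => /eqP hz.
    have : agree x z = agree x y by rewrite hz.
    rewrite /z agree_flip /S; case: ifP => [/eqP -> | /negbT h].
      by move/setP/(_ k); rewrite !inE eqxx.
    by move=> e; rewrite -e eqxx in h.
  have hzx : z != x by apply/negP => /eqP e; rewrite e H2xx in Hxz.
  have hiS : i \notin agree x z.
    by rewrite /z agree_flip /S; case: ifP => _; rewrite !inE // eq_sym.
  have hjS : j \notin agree x z.
    by rewrite /z agree_flip /S; case: ifP => _; rewrite !inE // eq_sym.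
  move/forallP/(_ x)/forallP/(_ z)/implyP/(_ Hxz): Hsw.
  rewrite /swapcol eqxx (negbTE hzx) (negbTE hzy) /coordcol.
  move: hi hj hiS hjS; rewrite !inE => hi hj hiS hjS.
  by rewrite (F2_ne2 hi hiS) (F2_ne2 hj hjS) eqxx.
- case/orP => /eqP h; split; rewrite ?H2E ?h ?cards1 //.
  + by apply: (swap_proper (m := i)) => //; rewrite eqxx.
  + by apply: (swap_proper (m := j)) => //; rewrite eqxx orbT.
Qed.

Lemma ratio (N a b : nat) : (0 < N)%N ->
  ((N * a)%:R / (N * b)%:R : rat) = a%:R / b%:R.
Proof.
move=> hN; rewrite !natrM -mulf_div divff ?mul1r //.
by rewrite pnatr_eq0 -lt0n.
Qed.

Lemma cardV_gt0 n : (0 < #|{: vtx n}|)%N.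
Proof. by apply/card_gt0P; exists 0. Qed.

Lemma local_bound n (K : vtx n -> 'I_4) (x : vtx n) :
  (3 <= n)%N -> proper_col (@H2 n) K ->
  (#|[set y | (x, y) \in transition_edges (@H2 n) K]| <= 2)%N.
Proof.
move=> hn HK.
have hn2 : (2 <= n)%N by apply: ltnW.
set S := [set y | _].
have Kne u v : H2 u v -> K u != K v.
  by move=> h; move/forallP/(_ u)/forallP/(_ v)/implyP: HK; apply.
have hS y : y \in S -> H2 x y /\ (forall z, H2 x z -> z != y -> K z != K y).
  rewrite /S !inE /= => /andP [Hxy Hsw]; split => // z Hxz hzy.
  have hzx : z != x by apply/negP => /eqP e; rewrite e H2xx in Hxz.
  move/forallP/(_ x)/forallP/(_ z)/implyP/(_ Hxz): Hsw.
  by rewrite /swapcol eqxx (negbTE hzx) (negbTE hzy) eq_sym.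
have inj : {in S &, injective K}.
  move=> y1 y2 h1 h2 e; apply/eqP/negPn/negP => hne.
  case: (hS _ h2) => _ /(_ y1); case: (hS _ h1) => H1 _.
  by move=> /(_ H1 hne); rewrite e eqxx.
have cS : #|K @: S| = #|S| := card_in_imset inj.
have sub1 : K @: S \subset [set~ K x].
  apply/subsetP => c /imsetP [y hy ->]; rewrite !inE.
  by case: (hS _ hy) => Hxy _; rewrite eq_sym Kne.
have le3 : (#|S| <= 3)%N.
  by rewrite -cS; have := subset_leq_card sub1; rewrite cardsC1 card_ord.
pose N := [set y | H2 x y].
have cN : #|N| = n.+1.
  rewrite /N (_ : [set y | H2 x y] = [set y | (#|agree x y| <= 1)%N]).
    by rewrite (card_agree_x x (fun S => #|S| <= 1)%N) card_le1.
  by apply/setP => y; rewrite !inE H2E.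
have : ~~ (N \subset S) by apply/negP => /subset_leq_card; rewrite cN; lia.
case/subsetPn => z hzN hzS; rewrite inE in hzN.
have sub2 : K @: S \subset ~: [set K x; K z].
  apply/subsetP => c /imsetP [y hy ->]; rewrite !inE negb_or.
  case: (hS _ hy) => Hxy Hz.
  rewrite eq_sym Kne //= eq_sym; apply: Hz => //.
  by apply/negP => /eqP e; rewrite e hy in hzS.
have := subset_leq_card sub2; rewrite cS.
have := cardsC [set K x; K z]; rewrite cards2 card_ord (Kne _ _ hzN).
lia.
Qed.

Lemma proper_inj (T : finType) (C D : eqType) (e : rel T) (K1 : T -> C)
  (K2 : T -> D) (g : D -> C) :
  injective g -> (forall z, K1 z = g (K2 z)) -> proper_col e K1 = proper_col e K2.
Proof.
move=> gi h; apply: eq_forallb => x; apply: eq_forallb => y.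
by rewrite !h (inj_eq gi).
Qed.

Lemma trans_inj (T : finType) (C D : eqType) (e : rel T) (K1 : T -> C)
  (K2 : T -> D) (g : D -> C) :
  injective g -> (forall z, K1 z = g (K2 z)) ->
  transition_edges e K1 = transition_edges e K2.
Proof.
move=> gi h; apply/setP => p; rewrite !inE; congr (_ && _).
apply: (@proper_inj _ _ _ e _ _ g gi) => z; rewrite /swapcol.
by case: ifP => _; [|case: ifP].
Qed.

Definition enc (p : 'F_2 * 'F_2) : 'I_4 := inord (2 * (p.1 != 0) + (p.2 != 0)).

Lemma enc_inj : injective enc.
Proof.
move=> [a b] [c d]; rewrite /enc /=.
case: (F2c a) => ->; case: (F2c b) => ->; case: (F2c c) => ->; case: (F2c d) => ->;
  move/(congr1 val); rewrite /= !inordK //.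
Qed.

Lemma sum_fvE n (x y : vtx n) (k : 'I_n) : (x + y == fv k) = (agree x y == [set k]).
Proof.
rewrite /fv /ev /onev; apply/eqP/eqP => H.
- apply/setP => l; move/rowP/(_ l): H; rewrite !mxE eqxx /= => /eqP.
  by rewrite F2_sumE !inE => /eqP.
- apply/rowP => l; rewrite !mxE eqxx /=; apply/eqP; rewrite F2_sumE.
  by move/setP/(_ l): H; rewrite !inE => ->.
Qed.

Lemma rb_coord n (i j : 'I_n) : (3 <= n)%N -> i != j ->
  rb (@H2 n) (coordcol i j) = 2%:R / (n.+1)%:R.
Proof.
move=> hn hij; rewrite /rb trans_coord // card_edges.
rewrite (card_agreeP (fun S => (S == [set i]) || (S == [set j]))).
have ->: [set S : {set 'I_n} | (S == [set i]) || (S == [set j])] = [set [set i]; [set j]].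
  by apply/setP => S; rewrite !inE.
rewrite cards2.
have ->: ([set i] != [set j]) by apply/negP => /eqP /set1_inj /eqP; rewrite (negbTE hij).
exact: ratio (cardV_gt0 n).
Qed.

Theorem proposition4p10 (n : nat) (i j : 'I_n) :
  (3 <= n)%N -> (i < j)%N ->
  [/\ proper_col (@H2 n) (coordcol i j),
      transition_edges (@H2 n) (coordcol i j)
        = [set p : vtx n * vtx n | (p.1 + p.2 == fv i) || (p.1 + p.2 == fv j)],
      rb (@H2 n) (coordcol i j) = 2%:R / (n.+1)%:R,
      (forall K' : vtx n -> 'I_4, proper_col (@H2 n) K' ->
         rb (@H2 n) K' <= 2%:R / (n.+1)%:R)
    & (exists2 K' : vtx n -> 'I_4, proper_col (@H2 n) K' &
         rb (@H2 n) K' = 2%:R / (n.+1)%:R)].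
Proof.
move=> hn hlt.
have hij : i != j by apply/negP => /eqP e; rewrite e ltnn in hlt.
split.
- exact: coord_proper.
- by rewrite trans_coord //; apply/setP => -[x y]; rewrite !inE /= !sum_fvE.
- exact: rb_coord.
- move=> K HK; rewrite /rb card_edges -(ratio 2 n.+1 (cardV_gt0 n)).
  have hT : (#|transition_edges (@H2 n) K| <= #|{: vtx n}| * 2)%N.
    rewrite card_pairs -sum_const_all; apply: leq_sum => x _.
    exact: local_bound.
  rewrite ler_pM2r ?invr_gt0 ?ltr0n ?muln_gt0 ?cardV_gt0 //.
  by rewrite ler_nat.
- exists (fun x => enc (coordcol i j x)).
    by rewrite (@proper_inj _ _ _ _ _ (coordcol i j) enc enc_inj) //; exact: coord_proper.
  by rewrite /rb (@trans_inj _ _ _ _ _ (coordcol i j) enc enc_inj) // -/(rb _ _) rb_coord.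
Qed.
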